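(* With the notation of the context, let $u\in C^2(\Omega)$, let $w$ be a unit vector, and let $C_r,C_b$ be constants such that $d_r,d_b>0$. If $f_r(t)=f_b(t)$ for some $t\in\Omega$, then $\nu_u(t)=e$.
   Context: Let $\Omega\subset\mathbb R^2$, $e=(0,0,1)$, $n_b>n_r>1$. For $\kappa>1$ put $\Phi_\kappa(s)=s-\sqrt{\kappa^2-1+s^2}$. For $u\in C^2(\Omega)$ let $\nu_u(t)=(-\nabla u(t),1)/\sqrt{1+|\nabla u(t)|^2}$. For $c\in\{r,b\}$: $\lambda_c(t)=\Phi_{n_c}(e\cdot\nu_u(t))$, $m_c(t)=\frac1{n_c}\big(e-\lambda_c(t)\nu_u(t)\big)$ (a unit vector), $d_c(t)=\dfrac{C_c-(e-w)\cdot(t,u(t))}{n_c-w\cdot m_c(t)}$, $f_c(t)=(t,u(t))+d_c(t)m_c(t)$. *)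

(* Defs.v *)
From Stdlib Require Import Reals Lra.
Open Scope R_scope.

Definition R2 := (R * R)%type.
Definition R3 := (R * R * R)%type.

Definition v3 (a b c : R) : R3 := (a, b, c).
Definition x3 (v : R3) : R := fst (fst v).
Definition y3 (v : R3) : R := snd (fst v).
Definition z3 (v : R3) : R := snd v.

Definition dot3 (v w : R3) : R := x3 v * x3 w + y3 v * y3 w + z3 v * z3 w.
Definition add3 (v w : R3) : R3 := v3 (x3 v + x3 w) (y3 v + y3 w) (z3 v + z3 w).
Definition sub3 (v w : R3) : R3 := v3 (x3 v - x3 w) (y3 v - y3 w) (z3 v - z3 w).
Definition scal3 (a : R) (v : R3) : R3 := v3 (a * x3 v) (a * y3 v) (a * z3 v).

Definition e3 : R3 := v3 0 0 1.

Definition dist2 (p q : R2) : R :=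
  sqrt ((fst p - fst q) ^ 2 + (snd p - snd q) ^ 2).

Definition open2 (O : R2 -> Prop) : Prop :=
  forall p, O p -> exists r, 0 < r /\ forall q, dist2 p q < r -> O q.

Definition cont2_at (f : R2 -> R) (p : R2) : Prop :=
  forall eps, 0 < eps -> exists delta, 0 < delta /\
    forall q, dist2 p q < delta -> Rabs (f q - f p) < eps.

Definition partial1 (f : R2 -> R) (p : R2) (l : R) : Prop :=
  derivable_pt_lim (fun s => f (s, snd p)) (fst p) l.
Definition partial2 (f : R2 -> R) (p : R2) (l : R) : Prop :=
  derivable_pt_lim (fun s => f (fst p, s)) (snd p) l.

Definition C2_on (O : R2 -> Prop) (u : R2 -> R) : Prop :=
  exists u1 u2 u11 u12 u21 u22 : R2 -> R,
    forall p, O p ->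
      partial1 u p (u1 p) /\ partial2 u p (u2 p) /\
      partial1 u1 p (u11 p) /\ partial2 u1 p (u12 p) /\
      partial1 u2 p (u21 p) /\ partial2 u2 p (u22 p) /\
      cont2_at u p /\ cont2_at u1 p /\ cont2_at u2 p /\
      cont2_at u11 p /\ cont2_at u12 p /\ cont2_at u21 p /\ cont2_at u22 p.

Definition Phi (kappa s : R) : R := s - sqrt (kappa ^ 2 - 1 + s ^ 2).

Definition nu (ux uy : R2 -> R) (t : R2) : R3 :=
  scal3 (/ sqrt (1 + ux t ^ 2 + uy t ^ 2)) (v3 (- ux t) (- uy t) 1).

Definition lam (n : R) (ux uy : R2 -> R) (t : R2) : R :=
  Phi n (dot3 e3 (nu ux uy t)).

Definition mvec (n : R) (ux uy : R2 -> R) (t : R2) : R3 :=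
  scal3 (/ n) (sub3 e3 (scal3 (lam n ux uy t) (nu ux uy t))).

Definition graphpt (u : R2 -> R) (t : R2) : R3 := v3 (fst t) (snd t) (u t).

Definition dist_c (n C : R) (w : R3) (u ux uy : R2 -> R) (t : R2) : R :=
  (C - dot3 (sub3 e3 w) (graphpt u t)) / (n - dot3 w (mvec n ux uy t)).

Definition fmap (n C : R) (w : R3) (u ux uy : R2 -> R) (t : R2) : R3 :=
  add3 (graphpt u t) (scal3 (dist_c n C w u ux uy t) (mvec n ux uy t)).

(* Main.v *)
Require Import Defs.
From Stdlib Require Import Reals Lra Psatz.
Open Scope R_scope.

Lemma key (nr nb Dr Db Lr Lb Nx Nz Px Pz : R) :
  1 < nr -> nr < nb -> 0 < Dr -> 0 < Db -> Lb < Lr -> Nx <> 0 ->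
  Px + Dr * (/ nr * (0 - Lr * Nx)) = Px + Db * (/ nb * (0 - Lb * Nx)) ->
  Pz + Dr * (/ nr * (1 - Lr * Nz)) = Pz + Db * (/ nb * (1 - Lb * Nz)) ->
  False.
Proof.
  intros h1 h2 hr hb hL hN ex ez.
  set (Ar := Dr * / nr) in *. set (Ab := Db * / nb) in *.
  assert (hAr : 0 < Ar) by (unfold Ar; apply Rmult_lt_0_compat; [lra| apply Rinv_0_lt_compat; lra]).
  assert (hAb : 0 < Ab) by (unfold Ab; apply Rmult_lt_0_compat; [lra| apply Rinv_0_lt_compat; lra]).
  assert (e1 : (Ar * Lr) * Nx = (Ab * Lb) * Nx).
  { unfold Ar, Ab. replace (Dr * / nr * Lr * Nx) with (- (Dr * (/ nr * (0 - Lr * Nx)))) by ring.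
    replace (Db * / nb * Lb * Nx) with (- (Db * (/ nb * (0 - Lb * Nx)))) by ring. lra. }
  apply Rmult_eq_reg_r in e1; [|exact hN].
  assert (e2 : Ar = Ab).
  { assert (Ar - (Ar * Lr) * Nz = Ab - (Ab*Lb)*Nz).
    { unfold Ar, Ab. replace (Dr * / nr - Dr * / nr * Lr * Nz) with (Dr * (/ nr * (1 - Lr * Nz))) by ring.
      replace (Db * / nb - Db * / nb * Lb * Nz) with (Db * (/ nb * (1 - Lb * Nz))) by ring. lra. }
    rewrite e1 in H. lra. }
  rewrite e2 in e1. apply Rmult_eq_reg_l in e1; lra.
Qed.

Theorem lemma3p2
  (Omega : R2 -> Prop) (u ux uy : R2 -> R) (n_r n_b C_r C_b : R) (w : R3) :
  open2 Omega ->
  C2_on Omega u ->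
  (forall p, Omega p -> partial1 u p (ux p) /\ partial2 u p (uy p)) ->
  1 < n_r -> n_r < n_b ->
  dot3 w w = 1 ->
  (forall t, Omega t -> 0 < dist_c n_r C_r w u ux uy t) ->
  (forall t, Omega t -> 0 < dist_c n_b C_b w u ux uy t) ->
  forall t, Omega t ->
    fmap n_r C_r w u ux uy t = fmap n_b C_b w u ux uy t ->
    nu ux uy t = e3.
Proof.
  intros _ _ _ h1 h2 _ hdr hdb t ht Heq.
  assert (hr := hdr t ht). assert (hb := hdb t ht).
  assert (hL : lam n_b ux uy t < lam n_r ux uy t).
  { unfold lam, Phi. set (s := dot3 e3 (nu ux uy t)).
    assert (sqrt (n_r ^ 2 - 1 + s ^ 2) < sqrt (n_b ^ 2 - 1 + s ^ 2)).
    { apply sqrt_lt_1; nra. }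
    lra. }
  unfold fmap, mvec in Heq.
  set (Dr := dist_c n_r C_r w u ux uy t) in *.
  set (Db := dist_c n_b C_b w u ux uy t) in *.
  set (Lr := lam n_r ux uy t) in *.
  set (Lb := lam n_b ux uy t) in *.
  clearbody Dr Db Lr Lb.
  set (k := / sqrt (1 + ux t ^ 2 + uy t ^ 2)) in *.
  assert (hk : 0 < k).
  { unfold k. apply Rinv_0_lt_compat, sqrt_lt_R0. nra. }
  unfold nu in *. fold k in Heq |- *.
  unfold add3, scal3, sub3, v3, x3, y3, z3, e3, graphpt in Heq; simpl in Heq.
  injection Heq; intros ez ey ex.
  destruct (Req_dec (ux t) 0) as [a0|a0].
  - destruct (Req_dec (uy t) 0) as [b0|b0].
    + unfold k. rewrite a0, b0. unfold scal3, v3, x3, y3, z3, e3; simpl. idtac.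
      replace (1 + 0 * (0 * 1) + 0 * (0 * 1)) with 1 by ring. rewrite sqrt_1, Rinv_1.
      unfold v3; repeat f_equal; ring.
    + exfalso. eapply (key n_r n_b Dr Db Lr Lb (k * - uy t) (k*1)); eauto.
      intro H. apply Rmult_integral in H. destruct H; lra.
  - exfalso. eapply (key n_r n_b Dr Db Lr Lb (k * - ux t) (k*1)); eauto.
    intro H. apply Rmult_integral in H. destruct H; lra.
Qed.
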